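(* For every integer $j\geq 3$, the function $l\mapsto \mathbf{g}_1(j,l)$ is strictly increasing on the integers $2\leq l\leq \lfloor (j+1)/2\rfloor$.
   Context: For $\varphi\in\mathbb{R}\setminus2\pi\mathbb{Z}$ let $\mathbf{f}(\varphi)=\frac{1}{8|\sin(\varphi/2)|}\left(\frac{2}{\sin^2(\varphi/2)}-1\right)+\cos\varphi$. For integers $j\geq1$, $l\geq1$ define $\mathbf{g}_1(j,l)=\sum_{k=1}^{j-1}\mathbf{f}\!\left(\frac{2k\pi}{j}\right)\left(1-\cos\frac{2(l-1)k\pi}{j}\right)$. $\lfloor x\rfloor$ is the largest integer not exceeding $x$. *)

(* Defs.v *)
From Stdlib Require Import Reals Lra Lia.
Open Scope R_scope.

Definition fbold (phi : R) : R :=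
  / (8 * Rabs (sin (phi / 2))) * (2 / (sin (phi / 2)) ^ 2 - 1) + cos phi.

Fixpoint sum_1_to (n : nat) (F : nat -> R) : R :=
  match n with
  | O => 0
  | S m => sum_1_to m F + F (S m)
  end.

Definition g1 (j l : nat) : R :=
  sum_1_to (j - 1)%nat (fun k =>
    fbold (2 * INR k * PI / INR j)
    * (1 - cos (2 * (INR l - 1) * INR k * PI / INR j))).

(* Main.v *)
Require Import Defs.
From Stdlib Require Import Reals Lra Lia Psatz Factorial.
Open Scope R_scope.

Lemma sum_ext n F G : (forall k, (1 <= k <= n)%nat -> F k = G k) -> sum_1_to n F = sum_1_to n G.
Proof.
  induction n; intros H; simpl; auto.
  rewrite IHn by (intros; apply H; lia). rewrite H by lia. reflexivity.
Qed.

Lemma sum_lin3 n a b c F G H :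
  sum_1_to n (fun k => a * F k + b * G k + c * H k) =
  a * sum_1_to n F + b * sum_1_to n G + c * sum_1_to n H.
Proof. induction n; simpl; [ring| rewrite IHn; ring]. Qed.

Lemma sum_minus n F G : sum_1_to n (fun k => F k - G k) = sum_1_to n F - sum_1_to n G.
Proof. induction n; simpl; [ring| rewrite IHn; ring]. Qed.

Lemma sum_plus n F G : sum_1_to n (fun k => F k + G k) = sum_1_to n F + sum_1_to n G.
Proof. induction n; simpl; [ring| rewrite IHn; ring]. Qed.

Lemma sum_const n c : sum_1_to n (fun _ => c) = INR n * c.
Proof. induction n; simpl sum_1_to; [simpl; ring| rewrite IHn, S_INR; ring]. Qed.

Lemma sum_le n F G : (forall k, (1 <= k <= n)%nat -> F k <= G k) -> sum_1_to n F <= sum_1_to n G.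
Proof.
  induction n; intros H; simpl; [lra|].
  assert (sum_1_to n F <= sum_1_to n G) by (apply IHn; intros; apply H; lia).
  specialize (H (S n)). assert (F (S n) <= G (S n)) by (apply H; lia). lra.
Qed.

Lemma sum_S n F : sum_1_to (S n) F = sum_1_to n F + F (S n).
Proof. reflexivity. Qed.

Lemma sin_tel n a : 2 * sin (a/2) * sum_1_to n (fun k => sin (INR k * a)) =
  cos (a/2) - cos ((2 * INR n + 1) * a / 2).
Proof.
  induction n.
  - simpl sum_1_to. replace ((2 * INR 0 + 1) * a / 2) with (a/2) by (simpl; field). ring.
  - rewrite sum_S. cbv beta. rewrite Rmult_plus_distr_l, IHn.
    rewrite S_INR.
    replace ((2 * INR n + 1) * a / 2) with ((INR n + 1) * a - a/2) by field.
    replace ((2 * (INR n + 1) + 1) * a / 2) with ((INR n + 1) * a + a/2) by field.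
    rewrite cos_minus, cos_plus. ring.
Qed.

Lemma cos_tel n a : 2 * sin (a/2) * sum_1_to n (fun k => cos (INR k * a)) =
  sin ((2 * INR n + 1) * a / 2) - sin (a/2).
Proof.
  induction n.
  - simpl sum_1_to. replace ((2 * INR 0 + 1) * a / 2) with (a/2) by (simpl; field). ring.
  - rewrite sum_S. cbv beta. rewrite Rmult_plus_distr_l, IHn.
    rewrite S_INR.
    replace ((2 * INR n + 1) * a / 2) with ((INR n + 1) * a - a/2) by field.
    replace ((2 * (INR n + 1) + 1) * a / 2) with ((INR n + 1) * a + a/2) by field.
    rewrite sin_minus, sin_plus. ring.
Qed.

Lemma sin_kPI k : sin (INR k * PI) = 0.
Proof.
  induction k. simpl. rewrite Rmult_0_l; apply sin_0.
  rewrite S_INR. replace ((INR k + 1) * PI) with (INR k * PI + PI) by ring.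
  rewrite neg_sin, IHk. ring.
Qed.

Definition u (x : R) : R := / (2 * sin x ^ 2) - / 4.

Lemma D_point x L : 0 < sin x ->
  fbold (2*x) * (1 - cos (2*L*x)) - fbold (2*x) * (1 - cos (2*(L-1)*x)) =
  u x * sin ((2*L-1)*x) + /2 * (cos (2*L*x) + cos (2*(L-2)*x) - cos (2*(L+1)*x) - cos (2*(L-1)*x)).
Proof.
  intros Hs.
  set (a := (2*L-1)*x).
  replace (2*L*x) with (a + x) by (unfold a; ring).
  replace (2*(L-1)*x) with (a - x) by (unfold a; ring).
  replace (2*(L-2)*x) with (a - 3*x) by (unfold a; ring).
  replace (2*(L+1)*x) with (a + 3*x) by (unfold a; ring).
  assert (F3 : sin (3*x) = sin x + 2 * cos (2*x) * sin x).
  { replace (3*x) with (2*x + x) by ring.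
    pattern (sin x) at 1. replace x with (2*x - x) at 1 by ring.
    rewrite sin_minus, sin_plus. ring. }
  rewrite !cos_plus, !cos_minus, F3.
  unfold fbold, u. replace (2*x/2) with x by field.
  rewrite Rabs_pos_eq by lra.
  field. lra.
Qed.

Lemma D2_point x b : sin x <> 0 ->
  u x * (sin (b + 2*x) - 2 * sin b + sin (b - 2*x)) =
  -(3/2) * sin b - /4 * (sin (b + 2*x) + sin (b - 2*x)).
Proof.
  intros Hs.
  assert (HS : sin (b + 2*x) + sin (b - 2*x) = 2 * sin b * (1 - 2 * sin x * sin x)).
  { rewrite sin_plus, sin_minus, cos_2a_sin. ring. }
  replace (sin (b + 2*x) - 2 * sin b + sin (b - 2*x)) with
    ((sin (b + 2*x) + sin (b - 2*x)) - 2 * sin b) by ring.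
  rewrite HS. unfold u. field. auto.
Qed.

Lemma fact_INR n : INR (fact (S n)) = INR (S n) * INR (fact n).
Proof. rewrite fact_simpl, mult_INR; reflexivity. Qed.

Lemma sin3 x : sin (3*x) = 3 * sin x - 4 * sin x ^ 3.
Proof.
  replace (3*x) with (2*x + x) by ring.
  rewrite sin_plus, sin_2a, cos_2a_sin.
  pose proof (sin2_cos2 x) as H. unfold Rsqr in H.
  replace (2 * sin x * cos x * cos x) with (2 * sin x * (cos x * cos x)) by ring.
  replace (cos x * cos x) with (1 - sin x * sin x) by lra.
  ring.
Qed.

Lemma M3_point x : 0 < sin x -> u x * sin (3*x) >= 27/10 - 16/5 * sin x.
Proof.
  intros Hs. pose proof (SIN_bound x) as [_ H1].
  rewrite sin3. set (s := sin x) in *.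
  assert (Hp : 0 < s^4 + 9/20*s^2 - 27/10*s + 3/2).
  { assert (0 <= (s^2 - 31/50)^2) by (apply pow2_ge_0). assert (0 <= (13/10*s - 27/26)^2) by (apply pow2_ge_0).
    assert (s^4 + 9/20*s^2 - 27/10*s + 3/2 = (s^2 - 31/50)^2 + (13/10*s - 27/26)^2 + (3/2 - (31/50)^2 - (27/26)^2)) by field.
    lra. }
  unfold u. fold s.
  assert (E : (/ (2 * s ^ 2) - / 4) * (3 * s - 4 * s ^ 3) - (27/10 - 16/5 * s)
     = (s^4 + 9/20*s^2 - 27/10*s + 3/2) / s) by (field; lra).
  assert (0 < (s^4 + 9/20*s^2 - 27/10*s + 3/2) / s) by (apply Rdiv_lt_0_compat; lra).
  lra.
Qed.
Lemma f0 : INR (fact 0) = 1. Proof. reflexivity. Qed.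
Lemma f1 : INR (fact 1) = 1. Proof. reflexivity. Qed.
Lemma f2 : INR (fact 2) = 2. Proof. rewrite !fact_INR. simpl. lra. Qed.
Lemma f3 : INR (fact 3) = 6. Proof. rewrite !fact_INR. simpl. lra. Qed.
Lemma f4 : INR (fact 4) = 24. Proof. rewrite !fact_INR. simpl. lra. Qed.
Lemma f5 : INR (fact 5) = 120. Proof. rewrite !fact_INR. simpl. lra. Qed.
Lemma f6 : INR (fact 6) = 720. Proof. rewrite !fact_INR. simpl. lra. Qed.
Lemma f7 : INR (fact 7) = 5040. Proof. rewrite !fact_INR. simpl. lra. Qed.
Lemma f8 : INR (fact 8) = 40320. Proof. rewrite !fact_INR. simpl. lra. Qed.
Lemma ycos_le_sin : forall y, 0 < y -> y <= 1 -> y * cos y <= sin y.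
Proof.
  intros y H0 H1.
  pose proof PI_RGT_0. assert (2 < PI) by (pose proof PI2_1; lra).
  destruct (SIN y) as [Hs _]; try lra.
  destruct (COS y) as [_ Hc]; try lra.
  unfold sin_lb, cos_ub, sin_approx, cos_approx, sin_term, cos_term in *.
  cbn [sum_f_R0 Nat.mul Nat.add] in *.
  rewrite f0,f1,f2,f3,f4,f5,f6,f7,f8 in *.
  assert (Hc' : cos y <= 1 - y^2/2 + y^4/24 - y^6/720 + y^8/40320).
  { eapply Rle_trans; [exact Hc| right]. field. }
  assert (Hs' : y - y^3/6 + y^5/120 - y^7/5040 <= sin y).
  { eapply Rle_trans; [| exact Hs]. right; field. }
  assert (y * cos y <= y * (1 - y^2/2 + y^4/24 - y^6/720 + y^8/40320)).
  { apply Rmult_le_compat_l; lra. }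
  assert (0 < y^2) by nra. assert (y^2 <= 1) by nra.
  assert (0 <= y^4) by nra. assert (y^4 <= y^2) by nra.
  assert (y^6 <= y^4) by nra.  assert (y^8 <= y^6) by nra. assert (0<= y^6) by nra.
  nra.
Qed.

Definition X (j k : nat) : R := INR k * PI / INR j.
Definition Tsum j n := sum_1_to (j-1) (fun k => sin (INR n * X j k)).
Definition Msum j m := sum_1_to (j-1) (fun k => u (X j k) * sin (INR m * X j k)).
Definition Esum j r := sum_1_to (j-1) (fun k => cos (2 * INR r * X j k)).

Lemma INR_pos j : (1 <= j)%nat -> 0 < INR j.
Proof. intros; apply lt_0_INR; lia. Qed.

Lemma X_sin_pos j k : (1 <= k)%nat -> (k <= j - 1)%nat -> 0 < sin (X j k).
Proof.
  intros H1 H2. assert (HJ : 0 < INR j) by (apply INR_pos; lia).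
  assert (Hk : 1 <= INR k) by (apply (le_INR 1); lia).
  assert (Hkj : INR k < INR j) by (apply lt_INR; lia).
  pose proof PI_RGT_0.
  apply sin_gt_0; unfold X.
  - apply Rdiv_lt_0_compat; nra.
  - apply (Rmult_lt_reg_r (INR j)); auto. unfold Rdiv. rewrite Rmult_assoc, Rinv_l by lra. nra.
Qed.

Lemma T_tel j n : (1 <= j)%nat ->
  2 * sin (INR n * PI / (2 * INR j)) * Tsum j n =
  cos (INR n * PI / (2 * INR j)) - cos (INR n * PI - INR n * PI / (2 * INR j)).
Proof.
  intros Hj. assert (HJ : 0 < INR j) by (apply INR_pos; lia).
  unfold Tsum.
  rewrite (sum_ext _ _ (fun k => sin (INR k * (INR n * PI / INR j)))).
  2:{ intros k _. unfold X. f_equal. field. lra. }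
  replace (INR n * PI / (2 * INR j)) with ((INR n * PI / INR j) / 2) by (field; lra).
  rewrite sin_tel. rewrite minus_INR by lia. simpl (INR 1).
  f_equal. f_equal. field. lra.
Qed.

Lemma T_nonneg j p : (1 <= j)%nat -> (2*p+1 <= j)%nat -> 0 <= Tsum j (2*p+1).
Proof.
  intros Hj Hn. assert (HJ : 0 < INR j) by (apply INR_pos; lia).
  pose proof (T_tel j (2*p+1) Hj) as H.
  set (y := INR (2*p+1) * PI / (2 * INR j)) in *.
  assert (Hn' : INR (2*p+1) <= INR j) by (apply le_INR; lia).
  assert (Hn1 : 1 <= INR (2*p+1)) by (apply (le_INR 1); lia).
  pose proof PI_RGT_0.
  assert (Hy0 : 0 < y) by (unfold y; apply Rdiv_lt_0_compat; nra).
  assert (Hy1 : y <= PI/2).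
  { unfold y. apply (Rmult_le_reg_r (2 * INR j)); [lra|].
    unfold Rdiv. rewrite Rmult_assoc, Rinv_l by lra. nra. }
  replace (INR (2*p+1) * PI - y) with ((PI - y) + 2 * INR p * PI) in H.
  2:{ rewrite plus_INR, mult_INR. simpl. ring. }
  rewrite cos_period, Rtrigo_facts.cos_pi_minus in H.
  assert (0 < sin y) by (apply sin_gt_0; lra).
  assert (0 <= cos y) by (apply cos_ge_0; lra).
  nra.
Qed.

Lemma PI_gt3 : 3 < PI.
Proof.
  pose proof (PI_ineq 5) as [H _].
  unfold tg_alt, PI_tg in H. simpl in H. lra.
Qed.

Lemma T1_bound j : (3 <= j)%nat -> Tsum j 1 <= 2 * INR j / PI.
Proof.
  intros Hj. assert (HJ : 3 <= INR j) by (replace 3 with (INR 3) by (simpl; ring); apply le_INR; lia).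
  pose proof (T_tel j 1 ltac:(lia)) as H.
  simpl (INR 1) in H.
  set (y := 1 * PI / (2 * INR j)) in *.
  pose proof PI_gt3. pose proof PI_4.
  assert (Hy0 : 0 < y) by (unfold y; apply Rdiv_lt_0_compat; nra).
  assert (Hy1 : y <= 1).
  { unfold y. apply (Rmult_le_reg_r (2 * INR j)); [lra|].
    unfold Rdiv. rewrite Rmult_assoc, Rinv_l by lra. nra. }
  replace (1 * PI - y) with ((PI - y) + 2 * INR 0 * PI) in H by (simpl; ring).
  rewrite cos_period, Rtrigo_facts.cos_pi_minus in H.
  assert (Hs : 0 < sin y) by (apply sin_gt_0; lra).
  pose proof (ycos_le_sin y Hy0 Hy1).
  assert (HT : y * Tsum j 1 <= 1).
  { apply (Rmult_le_reg_r (sin y)); auto. nra. }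
  assert (Hyy : 2 * INR j / PI = / y) by (unfold y; field; lra).
  rewrite Hyy. apply (Rmult_le_reg_l y); auto. rewrite Rinv_r by lra. lra.
Qed.

Lemma E_m1 j r : (1 <= r)%nat -> (r <= j - 1)%nat -> Esum j r = -1.
Proof.
  intros H1 H2. assert (HJ : 0 < INR j) by (apply INR_pos; lia).
  set (a := 2 * INR r * PI / INR j).
  assert (Hc := cos_tel (j-1) a).
  rewrite (sum_ext _ _ (fun k => cos (2 * INR r * X j k))) in Hc.
  2:{ intros k _. unfold X, a. f_equal. field. lra. }
  fold (Esum j r) in Hc.
  assert (Hr : 1 <= INR r) by (apply (le_INR 1); lia).
  assert (Hrj : INR r < INR j) by (apply lt_INR; lia).
  pose proof PI_RGT_0.
  assert (Hy : 0 < sin (a/2)).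
  { apply sin_gt_0; unfold a.
    - apply Rdiv_lt_0_compat; [| lra]. apply Rdiv_lt_0_compat; nra.
    - replace (2 * INR r * PI / INR j / 2) with (INR r * PI / INR j) by (field; lra).
      apply (Rmult_lt_reg_r (INR j)); auto. unfold Rdiv. rewrite Rmult_assoc, Rinv_l by lra. nra. }
  replace ((2 * INR (j-1) + 1) * a / 2) with (- (a/2) + 2 * INR r * PI) in Hc.
  2:{ rewrite minus_INR by lia. simpl (INR 1). unfold a. field. lra. }
  rewrite sin_period, sin_neg in Hc.
  nra.
Qed.

Lemma E_ge j r : (r <= j - 1)%nat -> -1 <= Esum j r.
Proof.
  intros H. destruct r as [|r].
  - unfold Esum. rewrite (sum_ext _ _ (fun _ => 1)).
    + rewrite sum_const. pose proof (pos_INR (j-1)). lra.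
    + intros. simpl. rewrite !Rmult_0_r, Rmult_0_l. apply cos_0.
  - rewrite E_m1; lra || lia.
Qed.

Lemma sum_scal n c F : sum_1_to n (fun k => c * F k) = c * sum_1_to n F.
Proof. induction n; simpl; [ring| rewrite IHn; ring]. Qed.

Lemma sum_zero n F : (forall k, (1 <= k <= n)%nat -> F k = 0) -> sum_1_to n F = 0.
Proof.
  intros H. rewrite (sum_ext _ _ (fun _ => 0)) by auto. rewrite sum_const. ring.
Qed.

Lemma M_j j : (1 <= j)%nat -> Msum j j = 0.
Proof.
  intros Hj. assert (HJ : 0 < INR j) by (apply INR_pos; lia).
  unfold Msum. apply sum_zero. intros k _.
  replace (INR j * X j k) with (INR k * PI) by (unfold X; field; lra).
  rewrite sin_kPI. ring.
Qed.

Lemma sin_pm j k : (1 <= j)%nat ->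
  sin (INR (j+1) * X j k) + sin (INR (j-1) * X j k) = 0.
Proof.
  intros Hj. assert (HJ : 0 < INR j) by (apply INR_pos; lia).
  replace (INR (j+1) * X j k) with (INR k * PI + X j k).
  2:{ rewrite plus_INR. simpl (INR 1). unfold X. field. lra. }
  replace (INR (j-1) * X j k) with (INR k * PI - X j k).
  2:{ rewrite minus_INR by lia. simpl (INR 1). unfold X. field. lra. }
  rewrite sin_plus, sin_minus, sin_kPI. ring.
Qed.

Lemma M_j1 j : (1 <= j)%nat -> Msum j (j+1) = - Msum j (j-1).
Proof.
  intros Hj.
  assert (Msum j (j+1) + Msum j (j-1) = 0); [|lra].
  unfold Msum. rewrite <- sum_plus. apply sum_zero. intros k _.
  rewrite <- Rmult_plus_distr_l, sin_pm by auto. ring.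
Qed.

Lemma T_j1 j : (1 <= j)%nat -> Tsum j (j+1) = - Tsum j (j-1).
Proof.
  intros Hj.
  assert (Tsum j (j+1) + Tsum j (j-1) = 0); [|lra].
  unfold Tsum. rewrite <- sum_plus. apply sum_zero. intros k _.
  apply sin_pm; auto.
Qed.

Lemma M_second j i : (1 <= j)%nat ->
  Msum j (2*i+5) - 2 * Msum j (2*i+3) + Msum j (2*i+1) =
  -(3/2) * Tsum j (2*i+3) - /4 * (Tsum j (2*i+5) + Tsum j (2*i+1)).
Proof.
  intros Hj.
  transitivity (sum_1_to (j-1) (fun k => 1 * (u (X j k) * sin (INR (2*i+5) * X j k))
     + (-2) * (u (X j k) * sin (INR (2*i+3) * X j k)) + 1 * (u (X j k) * sin (INR (2*i+1) * X j k)))).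
  { rewrite sum_lin3. unfold Msum. ring. }
  transitivity (sum_1_to (j-1) (fun k => (-(3/2)) * sin (INR (2*i+3) * X j k)
     + (- /4) * sin (INR (2*i+5) * X j k) + (- /4) * sin (INR (2*i+1) * X j k))).
  2:{ rewrite sum_lin3. unfold Tsum. ring. }
  apply sum_ext. intros k Hk.
  assert (Hs : 0 < sin (X j k)) by (apply X_sin_pos; lia).
  set (x := X j k) in *.
  set (b := INR (2*i+3) * x).
  replace (INR (2*i+5) * x) with (b + 2*x) by (unfold b; rewrite !plus_INR, !mult_INR; simpl; ring).
  replace (INR (2*i+1) * x) with (b - 2*x) by (unfold b; rewrite !plus_INR, !mult_INR; simpl; ring).
  assert (Hn : sin x <> 0) by (intro Hz; rewrite Hz in Hs; lra). pose proof (D2_point x b Hn).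
  lra.
Qed.

Lemma M3_pos j : (5 <= j)%nat -> 0 < Msum j 3.
Proof.
  intros Hj. assert (HJ : 5 <= INR j) by (replace 5 with (INR 5) by (simpl; ring); apply le_INR; lia).
  assert (H1 : sum_1_to (j-1) (fun k => 27/10 - 16/5 * sin (INR 1 * X j k)) <= Msum j 3).
  { apply sum_le. intros k Hk.
    assert (Hs : 0 < sin (X j k)) by (apply X_sin_pos; lia).
    replace (INR 3) with 3 by (simpl; ring). replace (INR 1) with 1 by reflexivity.
    rewrite Rmult_1_l. pose proof (M3_point (X j k) Hs). lra. }
  rewrite sum_minus, sum_const, sum_scal in H1. fold (Tsum j 1) in H1.
  pose proof (T1_bound j ltac:(lia)).
  rewrite minus_INR in H1 by lia. simpl (INR 1) in H1.
  pose proof PI_gt3.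
  assert (2*INR j / PI <= 2 * INR j / 3).
  { unfold Rdiv; apply Rmult_le_compat_l; [lra|]. apply Rinv_le_contravar; lra. }
  lra.
Qed.

Lemma chain_down (a : nat -> R) i n :
  (forall m, (i <= m)%nat -> (m < i + n)%nat -> a (S m) <= a m) -> a (i + n)%nat <= a i.
Proof.
  induction n; intros H.
  - rewrite Nat.add_0_r. lra.
  - replace (i + S n)%nat with (S (i + n)) by lia.
    assert (a (S (i+n)) <= a (i+n)%nat) by (apply H; lia).
    assert (a (i+n)%nat <= a i) by (apply IHn; intros; apply H; lia). lra.
Qed.

Lemma chain_up (a : nat -> R) i n :
  (forall m, (i <= m)%nat -> (m < i + n)%nat -> a m <= a (S m)) -> a i <= a (i + n)%nat.
Proof.
  intros H. pose proof (chain_down (fun m => - a m) i n). simpl in H0.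
  assert (- a (i+n)%nat <= - a i); [|lra]. apply H0. intros. specialize (H m H1 H2). lra.
Qed.

Lemma strict_prop (a : nat -> R) p q k :
  (forall i, (p <= i)%nat -> (i + 2 <= q)%nat -> a (i+2)%nat - a (i+1)%nat <= a (i+1)%nat - a i) ->
  (p <= k)%nat -> a (S k) < a k ->
  forall n, (k + n + 1 <= q)%nat -> a (k + n + 1)%nat < a (k + n)%nat.
Proof.
  intros Hc Hpk Hk n. induction n; intros Hn.
  - rewrite Nat.add_0_r. replace (k+1)%nat with (S k) by lia. auto.
  - assert (a (k + n + 1)%nat < a (k + n)%nat) by (apply IHn; lia).
    specialize (Hc (k+n)%nat ltac:(lia) ltac:(lia)).
    replace (k + n + 2)%nat with (k + S n + 1)%nat in Hc by lia.
    replace (k + n + 1)%nat with (k + S n)%nat in Hc, H by lia. lra.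
Qed.

Lemma concave_pos (a : nat -> R) p q :
  (forall i, (p <= i)%nat -> (i + 2 <= q)%nat -> a (i+2)%nat - a (i+1)%nat <= a (i+1)%nat - a i) ->
  0 < a p -> (0 <= a q \/ a q = - a (q - 1)%nat) ->
  forall i, (p <= i)%nat -> (i < q)%nat -> 0 < a i.
Proof.
  intros Hc Hp Hend i Hpi Hiq.
  destruct (Rlt_or_le 0 (a i)) as [|Hai]; auto. exfalso.
  assert (Hex : exists k, (p <= k)%nat /\ (k < i)%nat /\ a (S k) < a k).
  { apply Classical_Prop.NNPP. intros Hne.
    assert (a p <= a (p + (i - p))%nat).
    { apply chain_up. intros m H1 H2. destruct (Rlt_or_le (a (S m)) (a m)); [|auto].
      exfalso. apply Hne. exists m. repeat split; auto; lia. }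
    replace (p + (i - p))%nat with i in H by lia. lra. }
  destruct Hex as [k [Hpk [Hki Hk]]].
  pose proof (strict_prop a p q k Hc Hpk Hk) as Hs.
  assert (Hdown : a (i + (q - 1 - i))%nat <= a i).
  { apply chain_down. intros m H1 H2.
    specialize (Hs (m - k)%nat ltac:(lia)).
    replace (k + (m - k) + 1)%nat with (S m) in Hs by lia.
    replace (k + (m - k))%nat with m in Hs by lia. lra. }
  replace (i + (q - 1 - i))%nat with (q - 1)%nat in Hdown by lia.
  specialize (Hs (q - 1 - k)%nat ltac:(lia)).
  replace (k + (q - 1 - k) + 1)%nat with q in Hs by lia.
  replace (k + (q - 1 - k))%nat with (q - 1)%nat in Hs by lia.
  destruct Hend; lra.
Qed.

Lemma g1_diff j p : (1 <= j)%nat ->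
  g1 j (p+3) - g1 j (p+2) =
  Msum j (2*p+3) + /2 * (Esum j (p+2) + Esum j p - Esum j (p+3) - Esum j (p+1)).
Proof.
  intros Hj. assert (HJ : 0 < INR j) by (apply INR_pos; lia).
  unfold g1. rewrite <- sum_minus.
  rewrite (sum_ext _ _ (fun k => u (X j k) * sin (INR (2*p+3) * X j k) + /2 *
     (cos (2 * INR (p+2) * X j k) + cos (2 * INR p * X j k) - cos (2 * INR (p+3) * X j k)
      - cos (2 * INR (p+1) * X j k)))).
  2:{ intros k Hk.
      assert (Hs : 0 < sin (X j k)) by (apply X_sin_pos; lia).
      set (x := X j k) in *. set (L := INR (p+2)).
      replace (2 * INR k * PI / INR j) with (2 * x) by (unfold x, X; field; lra).
      replace (2 * (INR (p+3) - 1) * INR k * PI / INR j) with (2*L*x)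
        by (unfold L, x, X; rewrite !plus_INR; simpl; field; lra).
      replace (2 * (L - 1) * INR k * PI / INR j) with (2*(L-1)*x)
        by (unfold L, x, X; rewrite !plus_INR; simpl; field; lra).
      rewrite D_point by auto.
      replace ((2*L-1)*x) with (INR (2*p+3) * x) by (unfold L; rewrite !plus_INR, !mult_INR; simpl; ring).
      replace (2*(L-2)*x) with (2 * INR p * x) by (unfold L; rewrite !plus_INR; simpl; ring).
      replace (2*(L+1)*x) with (2 * INR (p+3) * x) by (unfold L; rewrite !plus_INR; simpl; ring).
      replace (2*(L-1)*x) with (2 * INR (p+1) * x) by (unfold L; rewrite !plus_INR; simpl; ring).
      reflexivity. }
  rewrite sum_plus, sum_scal, !sum_minus, sum_plus. reflexivity.
Qed.

Lemma D_pos j p : (3 <= j)%nat -> (p + 3 <= (j + 1) / 2)%nat -> 0 < g1 j (p+3) - g1 j (p+2).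
Proof.
  intros Hj Hp.
  pose proof (Nat.div_mod j 2 ltac:(lia)). pose proof (Nat.mod_upper_bound j 2 ltac:(lia)).
  pose proof (Nat.div_mod (j+1) 2 ltac:(lia)). pose proof (Nat.mod_upper_bound (j+1) 2 ltac:(lia)).
  rewrite g1_diff by lia.
  rewrite (E_m1 j (p+2)) by lia. rewrite (E_m1 j (p+3)) by lia. rewrite (E_m1 j (p+1)) by lia.
  pose proof (E_ge j p ltac:(lia)).
  set (a := fun i => Msum j (2*i+1)).
  assert (Ha : 0 < a (p+1)%nat).
  { apply (concave_pos a 1 (j/2)); try lia.
    - intros i Hi1 Hi2. unfold a.
      replace (2*(i+2)+1)%nat with (2*i+5)%nat by lia.
      replace (2*(i+1)+1)%nat with (2*i+3)%nat by lia.
      pose proof (M_second j i ltac:(lia)) as HM.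
      pose proof (T_nonneg j i ltac:(lia) ltac:(lia)) as HT1.
      pose proof (T_nonneg j (i+1) ltac:(lia) ltac:(lia)) as HT3.
      replace (2*(i+1)+1)%nat with (2*i+3)%nat in HT3 by lia.
      destruct (Nat.le_gt_cases (2*i+5) j) as [Hle|Hgt].
      + assert (HT5 := T_nonneg j (i+2) ltac:(lia)).
        replace (2*(i+2)+1)%nat with (2*i+5)%nat in HT5 by lia. specialize (HT5 Hle). lra.
      + pose proof (T_j1 j ltac:(lia)) as HT5.
        replace (j+1)%nat with (2*i+5)%nat in HT5 by lia.
        replace (j-1)%nat with (2*i+3)%nat in HT5 by lia. lra.
    - unfold a. replace (2*1+1)%nat with 3%nat by lia. apply M3_pos. lia.
    - unfold a. destruct (Nat.eq_dec (j mod 2) 1) as [Hodd|Hev].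
      + left. replace (2 * (j/2) + 1)%nat with j by lia. rewrite M_j by lia. lra.
      + right. replace (2 * (j/2) + 1)%nat with (j+1)%nat by lia.
        replace (2 * (j/2 - 1) + 1)%nat with (j-1)%nat by lia. apply M_j1. lia. }
  unfold a in Ha. replace (2*(p+1)+1)%nat with (2*p+3)%nat in Ha by lia.
  lra.
Qed.

Theorem proposition4p1 :
  forall j : nat, (3 <= j)%nat ->
  forall l1 l2 : nat,
    (2 <= l1)%nat -> (l1 < l2)%nat -> (l2 <= (j + 1) / 2)%nat ->
    g1 j l1 < g1 j l2.
Proof.
  intros j Hj l1 l2 H1 H12 H2.
  assert (Hgen : forall d, (l1 + 1 + d <= (j + 1) / 2)%nat -> g1 j l1 < g1 j (l1 + 1 + d)).
  2:{ replace l2 with (l1 + 1 + (l2 - l1 - 1))%nat by lia. apply Hgen. lia. }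
  clear H2. intros d.
  induction d; intros H2.
  - pose proof (D_pos j (l1 - 2) Hj ltac:(lia)).
    replace (l1 - 2 + 3)%nat with (l1 + 1 + 0)%nat in H by lia.
    replace (l1 - 2 + 2)%nat with l1 in H by lia. lra.
  - assert (g1 j l1 < g1 j (l1 + 1 + d)) by (apply IHd; lia).
    pose proof (D_pos j (l1 + d - 1) Hj ltac:(lia)).
    replace (l1 + d - 1 + 3)%nat with (l1 + 1 + S d)%nat in H0 by lia.
    replace (l1 + d - 1 + 2)%nat with (l1 + 1 + d)%nat in H0 by lia. lra.
Qed.
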